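(* Let $AP$ be a finite set, $p\in AP$, and let $\mathcal{A}=(2^{AP},Q,\delta,q_0,H,H_\exists,\Omega)$ be an HFTA that is nondeterministic in one path, with $Q_\ell$ the existential component containing $q_0$. Let $\exists^{C}p.\mathcal{A}=(2^{AP\setminus\{p\}},Q,\delta',q_0,H,H_\exists,\Omega)$, where for $q\in Q$ and $a\subseteq AP\setminus\{p\}$, $\delta'(q,a)=\delta(q,a)$ if $q\notin Q_\ell$ and $\delta'(q,a)=\delta(q,a)\vee\delta(q,a\cup\{p\})$ if $q\in Q_\ell$. Then $\mathcal{L}(\exists^{C}p.\mathcal{A})=\exists^{C}p.\mathcal{L}(\mathcal{A})$.
   Context: Trees: for a nonempty set $D$, a tree is a nonempty prefix-closed $T\subseteq D^*$ with root $\varepsilon$; children of $w$ are nodes $w\cdot d\in T$; non-blocking: every node has a child; an infinite path from the root is a sequence $\pi(0)\pi(1)\cdots$ with $\pi(0)=\varepsilon$ and $\pi(k+1)$ a child of $\pi(k)$. A Kripke tree over $AP$ is a non-blocking tree with $\mathit{Lab}:T\to2^{AP}$. Chain projection: for a set $L$ of Kripke trees over $AP$ and $p\in AP$, $\exists^{C}p.L$ is the set of Kripke trees $(T,\mathit{Lab})$ over $AP\setminus\{p\}$ for which there are an infinite path $\pi$ of $T$ from the root and a Kripke tree $(T,\mathit{Lab}')\in L$ such that $\mathit{Lab}'(w)=\mathit{Lab}(w)$ for nodes $w$ not on $\pi$ and $\mathit{Lab}'(w)\setminus\{p\}=\mathit{Lab}(w)$ for nodes $w$ on $\pi$. First-order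 one-step logic: for finite $Q$, a one-step interpretation is $(S,I)$, $S\neq\emptyset$, $I:S\to2^Q$; first-order $Q$-constraints are sentences of $\theta::=\top\mid\bot\mid q(x)\mid x=y\mid x\neq y\mid\theta\vee\theta\mid\theta\wedge\theta\mid\exists x.\theta\mid\forall x.\theta$ interpreted over $S$ with $q(x)$ true iff $q\in I(x)$. A $Q$-type is a set $A\subseteq Q$, with $t(A)(x):=\bigwedge_{q\in A}q(x)$ ($\top$ if $A=\emptyset$). For sets $T_\exists=\{A_1,\dots,A_n\}$ and $T_\forall$ of $Q$-types, the basic formula $\theta^{=}(T_\exists,T_\forall)$ is $\exists x_1\dots\exists x_n.(\mathrm{diff}(x_1,\dots,x_n)\wedge\bigwedge_{i=1}^n t(A_i)(x_i)\wedge\forall y.(\mathrm{diff}(x_1,\dots,x_n,y)\to\bigvee_{A\in T_\forall}t(A)(y)))$, where $\mathrm{diff}(z_1,\dots,z_k):=\bigwedge_{i\neq j}z_i\neq z_j$. For nonempty $Q'\subseteq Q$, $\theta^{=}(T_\exists,T_\forall)$ is $Q'$-functional in one direction if some $A\in T_\exists$ is a singleton $\{q\}$ with $q\in Q'$ and every $B\in(T_\exists\setminus\{A\})\cup T_\forall$ is disjoint from $Q'$; a first-order $Q$-constraint is $Q'$-functional in one direction if it is a disjunction of basic formulas that are. FTA $(\Sigma,Q,\delta,q_0,\Omega)$: $\delta$ maps $Q\times\Sigma$ to first-order $Q$-constraints. A run on a non-blocking $\Sigma$-labelled tree $(T,\mathit{Lab})$ is a $(Q\times T)$-labelled tree $(T_r,\mathit{Lab}_r)$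 with $\mathit{Lab}_r(\varepsilon)=(q_0,\varepsilon)$ in which each node $y$ with $\mathit{Lab}_r(y)=(q,w)$ has children whose labels are exactly $\{(q',w'):w'\in S_w,q'\in I(w')\}$ for some $(S_w,I)\models\delta(q,\mathit{Lab}(w))$, $S_w$ the children of $w$; a node $y$ reads $w$ if $\mathit{Lab}_r(y)=(q,w)$ for some $q$. It is accepting if along every infinite path from the root of $T_r$ the highest colour seen infinitely often is even; $\mathcal{L}$ is the set of trees with an accepting run. HFTA $(\Sigma,Q,\delta,q_0,H,H_\exists,\Omega)$: FTA with ordered partition $H=\langle Q_1,\dots,Q_n\rangle$ of $Q$ (order of $Q_i$ is $i$), each component existential (those in $H_\exists$), universal or transient: transient $Q_i$: $\delta(q,a)$ mentions only states of order $<i$; existential $Q_i$: $\delta(q,a)$ is a disjunction of $\exists x.(q'(x)\wedge\theta(x))$, $q'\in Q_i$, $\theta(x)$ mentioning only states of order $<i$; universal $Q_i$: conjunction of $\forall x.(q'(x)\vee\theta(x))$ likewise; $\Omega$ on an existential (universal) component has values in $\{m-1,m\}$, $m$ even (odd). An HFTA is nondeterministic in one path if $q_0$ lies in an existential component $Q_\ell$ and (1) for all $q\in Q_\ell$, $a\in\Sigma$, $\delta(q,a)$ is $Q_\ell$-functional in one direction; (2) for every $\mathcal{T}\in\mathcal{L}(\mathcal{A})$ and every infinite path $\pi$ of $\mathcal{T}$ from the root, there is an accepting run such that for each node $w$ on $\pi$ exactly one node of the run reads $w$, and its state belongs to $Q_\ell$. *)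

(* Defs.v *)
From Stdlib Require Lists.List.
From mathcomp Require Import all_boot all_order.
Set Implicit Arguments. Unset Strict Implicit. Unset Printing Implicit Defensive.

Inductive form (Q : Type) : Type :=
| FTrue | FFalse
| FAtom of Q & nat
| FEq of nat & nat
| FNeq of nat & nat
| FOr of form Q & form Q
| FAnd of form Q & form Q
| FEx of nat & form Q
| FAll of nat & form Q.
Arguments FTrue {Q}. Arguments FFalse {Q}.

Fixpoint fv (Q : Type) (f : form Q) : seq nat :=
  match f with
  | FTrue | FFalse => [::]
  | FAtom _ x => [:: x]
  | FEq x y | FNeq x y => [:: x; y]
  | FOr f g | FAnd f g => fv f ++ fv g
  | FEx x f | FAll x f => filter (predC1 x) (fv f)
  end.

Definition sentence (Q : Type) (f : form Q) : bool := nilp (fv f).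

Fixpoint fstates (Q : Type) (f : form Q) : seq Q :=
  match f with
  | FTrue | FFalse | FEq _ _ | FNeq _ _ => [::]
  | FAtom q _ => [:: q]
  | FOr f g | FAnd f g => fstates f ++ fstates g
  | FEx _ f | FAll _ f => fstates f
  end.

Definition upd (X : Type) (e : nat -> X) (x : nat) (v : X) : nat -> X :=
  fun i => if i == x then v else e i.

(* satisfaction in a one-step interpretation (S, I), S a subset of X *)
Fixpoint sat (Q : finType) (X : Type) (S : X -> Prop) (I : X -> {set Q})
    (e : nat -> X) (f : form Q) : Prop :=
  match f with
  | FTrue => True
  | FFalse => False
  | FAtom q x => q \in I (e x)
  | FEq x y => e x = e y
  | FNeq x y => e x <> e y
  | FOr f g => sat S I e f \/ sat S I e g
  | FAnd f g => sat S I e f /\ sat S I e g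
  | FEx x f => exists v, S v /\ sat S I (upd e x v) f
  | FAll x f => forall v, S v -> sat S I (upd e x v) f
  end.

(* (S, I) |= f  (for sentences the environment is irrelevant) *)
Definition models (Q : finType) (X : Type) (S : X -> Prop) (I : X -> {set Q})
    (f : form Q) : Prop :=
  forall e : nat -> X, (forall i, S (e i)) -> sat S I e f.

Definition fequiv (Q : finType) (f g : form Q) : Prop :=
  forall (X : Type) (S : X -> Prop) (I : X -> {set Q}),
    (exists x, S x) -> (models S I f <-> models S I g).

Definition bigOr (Q : Type) (l : seq (form Q)) : form Q := foldr (@FOr Q) FFalse l.
Definition bigAnd (Q : Type) (l : seq (form Q)) : form Q := foldr (@FAnd Q) FTrue l.

Definition ftype (Q : finType) (A : {set Q}) (x : nat) : form Q :=
  bigAnd [seq FAtom q x | q <- enum A].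

Fixpoint FExs (Q : Type) (n : nat) (f : form Q) : form Q :=
  match n with 0 => f | n'.+1 => FExs n' (FEx n' f) end.
(* FExs n f = Ex 0. Ex 1. ... Ex (n-1). f *)

Definition fdiff (Q : Type) (k : nat) : form Q :=
  bigAnd (flatten [seq [seq @FNeq Q i j | j <- iota 0 k & j != i] | i <- iota 0 k]).
Definition fndiff (Q : Type) (k : nat) : form Q :=
  bigOr (flatten [seq [seq @FEq Q i j | j <- iota 0 k & j != i] | i <- iota 0 k]).

(* basic formula theta^=(TE, TA): x_i is variable i-1 (i=1..n), y is variable n;
   (diff(x,y) -> phi) is written in negation normal form as (not diff(x,y)) \/ phi *)
Definition basic (Q : finType) (TE TA : {set {set Q}}) : form Q :=
  let As := enum TE in
  let n := size As in
  FExs n (FAnd (fdiff Q n)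
         (FAnd (bigAnd [seq ftype (nth set0 As i) i | i <- iota 0 n])
               (FAll n (FOr (fndiff Q n.+1) (bigOr [seq ftype A n | A <- enum TA]))))).

Definition functional_basic (Q : finType) (Q' : {set Q}) (TE TA : {set {set Q}}) : Prop :=
  exists2 A, A \in TE &
    exists2 q, q \in Q' & A = [set q] /\
      forall B, B \in (TE :\ A) :|: TA -> [disjoint B & Q'].

Definition functional (Q : finType) (Q' : {set Q}) (f : form Q) : Prop :=
  Q' != set0 /\
  exists l : seq ({set {set Q}} * {set {set Q}}),
    (forall x, Stdlib.Lists.List.In x l -> functional_basic Q' x.1 x.2) /\
    fequiv f (bigOr [seq basic x.1 x.2 | x <- l]).

Definition tree (D : Type) (T : seq D -> Prop) : Prop :=
  T [::] /\ forall w d, T (rcons w d) -> T w.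
Definition is_child (D : Type) (T : seq D -> Prop) (w w' : seq D) : Prop :=
  exists d, w' = rcons w d /\ T w'.
Definition nonblocking (D : Type) (T : seq D -> Prop) : Prop :=
  forall w, T w -> exists d, T (rcons w d).
Definition inf_path (D : Type) (T : seq D -> Prop) (pi : nat -> seq D) : Prop :=
  pi 0 = [::] /\ forall k, is_child T (pi k) (pi k.+1).
Definition on_path (D : Type) (pi : nat -> seq D) (w : seq D) : Prop :=
  exists k, pi k = w.

Definition kripke (AP : finType) (P : {set AP}) (D : Type)
    (T : seq D -> Prop) (Lab : seq D -> {set AP}) : Prop :=
  tree T /\ nonblocking T /\ forall w, T w -> Lab w \subset P.

Definition chain_proj (AP : finType) (D : Type) (p : AP)
    (L : (seq D -> Prop) -> (seq D -> {set AP}) -> Prop)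
    (T : seq D -> Prop) (Lab : seq D -> {set AP}) : Prop :=
  kripke [set~ p] T Lab /\
  exists pi, inf_path T pi /\
    exists Lab', L T Lab' /\
      forall w, T w ->
        (on_path pi w -> Lab' w :\ p = Lab w) /\
        (~ on_path pi w -> Lab' w = Lab w).

Record fta (Sig : Type) (Q : finType) := FTA {
  delta : Q -> Sig -> form Q;
  q0 : Q;
  Omega : Q -> nat }.

Definition is_run (Sig : Type) (Q : finType) (A : fta Sig Q) (D : Type)
    (T : seq D -> Prop) (Lab : seq D -> Sig)
    (Dr : Type) (Tr : seq Dr -> Prop) (Labr : seq Dr -> Q * seq D) : Prop :=
  tree Tr /\ Labr [::] = (q0 A, [::]) /\
  forall y, Tr y ->
    exists I : seq D -> {set Q},
      models (is_child T (Labr y).2) I (delta A (Labr y).1 (Lab (Labr y).2)) /\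
      (forall d, Tr (rcons y d) ->
          is_child T (Labr y).2 (Labr (rcons y d)).2 /\
          (Labr (rcons y d)).1 \in I (Labr (rcons y d)).2) /\
      (forall w' q', is_child T (Labr y).2 w' -> q' \in I w' ->
          exists d, Tr (rcons y d) /\ Labr (rcons y d) = (q', w')).

Definition inf_often (c : nat -> nat) (m : nat) : Prop :=
  forall n, exists k, n <= k /\ c k = m.

Definition parity_ok (c : nat -> nat) : Prop :=
  exists m, ~~ odd m /\ inf_often c m /\ forall m', inf_often c m' -> m' <= m.

Definition accepting (Sig : Type) (Q : finType) (A : fta Sig Q) (D : Type)
    (Dr : Type) (Tr : seq Dr -> Prop) (Labr : seq Dr -> Q * seq D) : Prop :=
  forall rho, inf_path Tr rho -> parity_ok (fun k => Omega A (Labr (rho k)).1).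

Definition lang (Sig : Type) (Q : finType) (A : fta Sig Q) (D : Type)
    (T : seq D -> Prop) (Lab : seq D -> Sig) : Prop :=
  tree T /\ nonblocking T /\
  exists (Dr : Type) (Tr : seq Dr -> Prop) (Labr : seq Dr -> Q * seq D),
    is_run A T Lab Tr Labr /\ accepting A Tr Labr.

(* The ordered partition H is given by hord: the component of q is
   [set q' | hord q' == hord q], and its order is hord q.
   hexist i holds iff the component of order i is in H_exists. *)
Record hfta (Sig : Type) (Q : finType) := HFTA {
  aut : fta Sig Q;
  hord : Q -> nat;
  hexist : pred nat }.

Definition exist_shape (Sig : Type) (Q : finType) (H : hfta Sig Q) (i : nat)
    (f : form Q) : Prop :=
  exists l : seq (Q * form Q),
    (forall qt, Stdlib.Lists.List.In qt l ->
       hord H qt.1 = i /\ all (fun q => hord H q < i) (fstates qt.2) /\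
       all (pred1 0) (fv qt.2)) /\
    fequiv f (bigOr [seq FEx 0 (FAnd (FAtom qt.1 0) qt.2) | qt <- l]).

Definition univ_shape (Sig : Type) (Q : finType) (H : hfta Sig Q) (i : nat)
    (f : form Q) : Prop :=
  exists l : seq (Q * form Q),
    (forall qt, Stdlib.Lists.List.In qt l ->
       hord H qt.1 = i /\ all (fun q => hord H q < i) (fstates qt.2) /\
       all (pred1 0) (fv qt.2)) /\
    fequiv f (bigAnd [seq FAll 0 (FOr (FAtom qt.1 0) qt.2) | qt <- l]).

Definition trans_shape (Sig : Type) (Q : finType) (H : hfta Sig Q) (i : nat)
    (f : form Q) : Prop :=
  exists g, sentence g /\ all (fun q => hord H q < i) (fstates g) /\ fequiv f g.

Definition is_hfta (Sig : Type) (Q : finType) (H : hfta Sig Q) : Prop :=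
  (forall q a, sentence (delta (aut H) q a)) /\
  forall i, (exists q, hord H q = i) ->
    if hexist H i then
      (forall q a, hord H q = i -> exist_shape H i (delta (aut H) q a)) /\
      (exists m, ~~ odd m /\
         forall q, hord H q = i -> Omega (aut H) q \in [:: m.-1; m])
    else
      (forall q a, hord H q = i -> trans_shape H i (delta (aut H) q a)) \/
      ((forall q a, hord H q = i -> univ_shape H i (delta (aut H) q a)) /\
       (exists m, odd m /\
          forall q, hord H q = i -> Omega (aut H) q \in [:: m.-1; m])).

Definition Ql (Sig : Type) (Q : finType) (H : hfta Sig Q) : {set Q} :=
  [set q | hord H q == hord H (q0 (aut H))].

Definition nondet_one_path (Sig : Type) (Q : finType) (D : Type) (H : hfta Sig Q) : Prop :=
  hexist H (hord H (q0 (aut H))) /\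
  (forall q a, q \in Ql H -> functional (Ql H) (delta (aut H) q a)) /\
  (forall (T : seq D -> Prop) (Lab : seq D -> Sig), lang (aut H) T Lab ->
     forall pi, inf_path T pi ->
       exists (Dr : Type) (Tr : seq Dr -> Prop) (Labr : seq Dr -> Q * seq D),
         is_run (aut H) T Lab Tr Labr /\ accepting (aut H) Tr Labr /\
         forall w, on_path pi w ->
           exists y, Tr y /\ (Labr y).2 = w /\ (Labr y).1 \in Ql H /\
             forall y', Tr y' -> (Labr y').2 = w -> y' = y).

(* the automaton  exists^C p. A  (its alphabet 2^(AP\{p}) is handled by
   restricting to trees whose labels avoid p) *)
Definition proj_aut (AP : finType) (Q : finType) (H : hfta {set AP} Q) (p : AP)
    : hfta {set AP} Q :=
  HFTA (FTA (fun q a => if q \in Ql H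
                        then FOr (delta (aut H) q a) (delta (aut H) q (p |: a))
                        else delta (aut H) q a)
            (q0 (aut H)) (Omega (aut H)))
       (hord H) (hexist H).

(* Main.v *)
Require Import Defs.
From mathcomp Require Import all_boot.
From Stdlib Require Import ClassicalEpsilon FunctionalExtensionality Classical.
Set Implicit Arguments. Unset Strict Implicit. Unset Printing Implicit Defensive.


Definition pb (P : Prop) : bool := if excluded_middle_informative P then true else false.
Lemma pbP (P : Prop) : reflect P (pb P).
Proof. rewrite /pb; case: excluded_middle_informative => h; constructor; done. Qed.

Section ListIn.
Lemma In_cat (T : Type) (x : T) s1 s2 : List.In x (s1 ++ s2) <-> List.In x s1 \/ List.In x s2.
Proof. elim: s1 => [|a s IH] /=; [tauto|rewrite IH; tauto]. Qed.
Lemma In_flatten (T : Type) (x : T) L : List.In x (flatten L) <-> exists s, List.In s L /\ List.In x s.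
Proof.
elim: L => [|s L IH] /=; first by split => // [[s []]].
rewrite In_cat IH; split.
- by case=> [h|[s' [h1 h2]]]; [exists s|exists s']; tauto.
- by case=> s' [[<-|h1] h2]; [left|right; exists s'].
Qed.
Lemma In_map (T U : Type) (f : T -> U) y s : List.In y (map f s) <-> exists x, List.In x s /\ y = f x.
Proof.
elim: s => [|a s IH] /=; first by split => // [[x []]].
rewrite IH; split.
- by case=> [<-|[x [h1 h2]]]; [exists a|exists x]; tauto.
- by case=> x [[<-|h1] h2]; [left|right; exists x].
Qed.
Lemma In_filter (T : Type) (P : pred T) x s : List.In x (filter P s) <-> List.In x s /\ P x.
Proof.
elim: s => [|a s IH] /=; first by split => // [[]].
case: ifP => Pa /=; rewrite ?IH; split.
- by case=> [<-|h]; tauto.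
- by case=> [[<-|h] h2]; tauto.
- by move=> h; tauto.
- by case=> [[E|h] h2]; [subst; rewrite Pa in h2|].
Qed.
Lemma In_mem (T : eqType) (x : T) s : List.In x s <-> x \in s.
Proof.
elim: s => [|a s IH] /=; first by split.
rewrite in_cons IH; split.
- by case=> [->|->]; rewrite ?eqxx ?orbT.
- by case/orP => [/eqP->|h]; tauto.
Qed.
End ListIn.

Section Sat.
Variables (Q : finType) (X : Type) (S : X -> Prop).

Lemma sat_mono (f : form Q) (I I' : X -> {set Q}) e :
  (forall v r, r \in fstates f -> r \in I v -> r \in I' v) -> sat S I e f -> sat S I' e f.
Proof.
elim: f e => //=.
- by move=> q x e h; apply: h; rewrite inE.
- by move=> f IHf g IHg e h [h1|h1]; [left; apply: IHf h1|right; apply: IHg h1] =>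
     v r hr; apply: h; rewrite mem_cat hr ?orbT.
- by move=> f IHf g IHg e h [h1 h2]; split; [apply: IHf h1|apply: IHg h2] =>
     v r hr; apply: h; rewrite mem_cat hr ?orbT.
- by move=> x f IH e h [v [Sv h1]]; exists v; split => //; apply: IH h1.
- by move=> x f IH e h h1 v Sv; apply: IH (h1 v Sv).
Qed.

Lemma sat_env (I : X -> {set Q}) (f : form Q) e1 e2 :
  (forall x, x \in fv f -> e1 x = e2 x) -> sat S I e1 f -> sat S I e2 f.
Proof.
elim: f e1 e2 => //=.
- by move=> q x e1 e2 h; rewrite h // inE.
- by move=> x y e1 e2 h; rewrite !h // !inE eqxx ?orbT.
- by move=> x y e1 e2 h; rewrite !h // !inE eqxx ?orbT.
- by move=> f IHf g IHg e1 e2 h [h1|h1]; [left; apply: IHf h1|right; apply: IHg h1] =>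
     x hx; apply: h; rewrite mem_cat hx ?orbT.
- by move=> f IHf g IHg e1 e2 h [h1 h2]; split; [apply: IHf h1|apply: IHg h2] =>
     x hx; apply: h; rewrite mem_cat hx ?orbT.
- move=> x f IH e1 e2 h [v [Sv h1]]; exists v; split => //; apply: IH h1 => y hy.
  rewrite /upd; case: eqP => // /eqP ne; apply: h; by rewrite mem_filter /= ne.
- move=> x f IH e1 e2 h h1 v Sv; apply: IH (h1 v Sv) => y hy.
  rewrite /upd; case: eqP => // /eqP ne; apply: h; by rewrite mem_filter /= ne.
Qed.

Lemma sentence_models (I : X -> {set Q}) (f : form Q) e :
  sentence f -> sat S I e f -> forall e', sat S I e' f.
Proof.
rewrite /sentence => /nilP h1 h2 e'; apply: sat_env h2 => x; by rewrite h1.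
Qed.

Lemma models_or (I : X -> {set Q}) (f g : form Q) :
  (exists s, S s) -> sentence f -> sentence g -> models S I (FOr f g) ->
  models S I f \/ models S I g.
Proof.
move=> [s0 Ss0] sf sg h.
case: (h (fun _ => s0)) => //= h1; [left|right] => e _; exact: sentence_models h1 e.
Qed.

Lemma sat_bigOr (I : X -> {set Q}) l e :
  sat S I e (bigOr l) <-> exists f, List.In f l /\ sat S I e f.
Proof.
elim: l => [|f l IH] /=; first by split => // [[f []]].
rewrite IH; split.
- by case=> [h|[g [h1 h2]]]; [exists f|exists g]; tauto.
- by case=> g [[<-|h1] h2]; [left|right; exists g].
Qed.

Lemma sat_bigAnd (I : X -> {set Q}) l e :
  sat S I e (bigAnd l) <-> forall f, List.In f l -> sat S I e f.
Proof.
elim: l => [|f l IH] /=; first by split.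
rewrite IH; split.
- by case=> h1 h2 g [<-|h]; auto.
- by move=> h; split; auto.
Qed.

Lemma sat_ftype (I : X -> {set Q}) A x e :
  sat S I e (ftype A x) <-> A \subset I (e x).
Proof.
rewrite /ftype sat_bigAnd; split.
- move=> h; apply/subsetP => q; rewrite -mem_enum => /In_mem hq.
  by apply: (h (FAtom q x)); apply/In_map; exists q.
- move/subsetP=> h f /In_map [q [hq ->]] /=; apply: h; rewrite -mem_enum; exact/In_mem.
Qed.

Lemma sat_FExs (I : X -> {set Q}) n f e :
  sat S I e (FExs n f) <->
  exists e', (forall i, i < n -> S (e' i)) /\ (forall i, n <= i -> e' i = e i) /\ sat S I e' f.
Proof.
elim: n f e => [|n IH] f e /=.
  split; first by move=> h; exists e.
  case=> e' [_ [h1 h2]].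
  have E : e = e' by apply: functional_extensionality => i; rewrite h1.
  by rewrite E.
rewrite IH; split.
- case=> e1 [h1 [h2 [v [Sv h3]]]]; exists (upd e1 n v); split; last split => //.
  + move=> i; rewrite ltnS leq_eqVlt /upd => /orP [/eqP->|lt]; first by rewrite eqxx.
    by case: eqP => // _; apply: h1.
  + move=> i ni; rewrite /upd; case: eqP => [E|_]; first by move: ni; rewrite E ltnn.
    by apply: h2; exact: ltnW.
- case=> e' [h1 [h2 h3]]; exists (upd e' n (e n)); split; last split.
  + move=> i lt; rewrite /upd; case: eqP => [E|_]; first by move: lt; rewrite E ltnn.
    by apply: h1; rewrite ltnS ltnW.
  + move=> i; rewrite leq_eqVlt /upd => /orP [/eqP->|lt]; first by rewrite eqxx.
    by case: eqP => [E|_]; [move: lt; rewrite E ltnn|apply: h2].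
  + exists (e' n); split; first exact: h1.
    have -> : upd (upd e' n (e n)) n (e' n) = e' by
      apply: functional_extensionality => i; rewrite /upd; case: eqP => [->|].
    done.
Qed.
End Sat.


Lemma In_pairs (Q : Type) k (F : nat -> nat -> form Q) f :
  List.In f (flatten [seq [seq F i j | j <- iota 0 k & j != i] | i <- iota 0 k]) <->
  exists i j, i < k /\ j < k /\ i != j /\ f = F i j.
Proof.
rewrite In_flatten; split.
- case=> s [/In_map [i [/In_mem hi ->]] /In_map [j [/In_filter [/In_mem hj ij] ->]]].
  move: hi hj; rewrite !mem_iota /= => hi hj.
  by exists i, j; rewrite eq_sym.
- case=> i [j [hi [hj [ij ->]]]].
  exists [seq F i j | j <- iota 0 k & j != i]; split.
  + apply/In_map; exists i; split => //; apply/In_mem; by rewrite mem_iota.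
  + apply/In_map; exists j; split => //; apply/In_filter; split; last by rewrite eq_sym.
    apply/In_mem; by rewrite mem_iota.
Qed.

Section Basic.
Variables (Q : finType) (X : Type) (S : X -> Prop).

Lemma sat_fdiff (I : X -> {set Q}) k e :
  sat S I e (fdiff Q k) <-> forall i j, i < k -> j < k -> i != j -> e i <> e j.
Proof.
rewrite /fdiff sat_bigAnd; split.
- move=> h i j hi hj ij.
  have hin : List.In (@FNeq Q i j) (flatten [seq [seq @FNeq Q i j | j <- iota 0 k & j != i] | i <- iota 0 k]).
    by apply/(In_pairs k (@FNeq Q)); exists i, j.
  exact: (h _ hin).
- by move=> h f /In_pairs [i [j [hi [hj [ij ->]]]]] /=; apply: h.
Qed.

Lemma sat_fndiff (I : X -> {set Q}) k e :
  sat S I e (fndiff Q k) <-> exists i j, i < k /\ j < k /\ i != j /\ e i = e j.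
Proof.
rewrite /fndiff sat_bigOr; split.
- case=> f [/In_pairs [i [j [hi [hj [ij ->]]]]] /= h]; by exists i, j.
- case=> i [j [hi [hj [ij h]]]]; exists (@FEq Q i j); split => //; apply/In_pairs; by exists i, j.
Qed.

Definition basic_sem (I : X -> {set Q}) (TE TA : {set {set Q}}) (e' : nat -> X) : Prop :=
  let n := size (enum TE) in
  (forall i, i < n -> S (e' i)) /\
  (forall i j, i < n -> j < n -> i != j -> e' i <> e' j) /\
  (forall i, i < n -> nth set0 (enum TE) i \subset I (e' i)) /\
  (forall v, S v -> (exists i, i < n /\ v = e' i) \/ exists B, B \in TA /\ B \subset I v).

Lemma sat_basic (I : X -> {set Q}) TE TA e :
  sat S I e (basic TE TA) <-> exists e', basic_sem I TE TA e'.
Proof.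
rewrite /basic sat_FExs; set n := size (enum TE); split.
- case=> e' [hS [_ /= [/sat_fdiff hd [/sat_bigAnd ht hA]]]].
  exists e'; split => //; split => //; split.
  + move=> i hi; apply/(sat_ftype S I _ i e'); apply: ht; apply/In_map; exists i; split => //.
    apply/In_mem; by rewrite mem_iota.
  + move=> v Sv; case: (hA v Sv) => [/sat_fndiff [i [j [hi [hj [ij E]]]]]|/sat_bigOr h].
    * left; move: E; rewrite /upd.
      have [Ei | ni] := eqVneq i n; have [Ej | nj] := eqVneq j n.
      -- by move: ij; rewrite Ei Ej eqxx.
      -- move=> /= E; exists j; split => //.
         by rewrite ltn_neqAle nj -ltnS.
      -- move=> /= E; exists i; split => //.
         by rewrite ltn_neqAle ni -ltnS.
      -- move=> /= E; exfalso; apply: (hd i j) => //.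
         by rewrite ltn_neqAle ni -ltnS.
         by rewrite ltn_neqAle nj -ltnS.
    * right; case: h => f [/In_map [B [/In_mem hB ->]] h]; exists B; split; first by rewrite -mem_enum.
      by move/(sat_ftype S I B n): h; rewrite /upd eqxx.
- case=> e' [hS [hd [ht hA]]].
  exists (fun i => if i < n then e' i else e i); split.
    by move=> i hi; rewrite hi; apply: hS.
  split; first by move=> i; rewrite leqNgt => /negbTE ->.
  split => /=.
    by apply/sat_fdiff => i j hi hj; rewrite hi hj; apply: hd.
  split.
    apply/sat_bigAnd => f /In_map [i [/In_mem hi ->]]; move: hi; rewrite mem_iota /= => hi.
    by apply/sat_ftype; rewrite hi; apply: ht.
  move=> v Sv; case: (hA v Sv) => [[i [hi E]]|[B [hB h]]].
  + left; apply/sat_fndiff; exists i, n; rewrite /upd eqxx ltnS ltnW // ltnS leqnn.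
    by rewrite (ltn_eqF hi) hi E.
  + right; apply/sat_bigOr; exists (ftype B n); split.
      apply/In_map; exists B; split => //; apply/In_mem; by rewrite mem_enum.
    by apply/sat_ftype; rewrite /upd eqxx.
Qed.
End Basic.


Section Restrict.
Variables (Sig : Type) (Q : finType) (H : hfta Sig Q).

Lemma fstates_exlist (l : seq (Q * form Q)) i r :
  (forall qt, List.In qt l -> hord H qt.1 = i /\ all (fun q => hord H q < i) (fstates qt.2) /\
       all (pred1 0) (fv qt.2)) ->
  r \in fstates (bigOr [seq FEx 0 (FAnd (FAtom qt.1 0) qt.2) | qt <- l]) -> hord H r <= i.
Proof.
elim: l => [|qt l IH] //= hl; rewrite in_cons mem_cat => /orP [/eqP->|/orP [hr|hr]].
- by case: (hl qt (or_introl erefl)) => ->.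
- case: (hl qt (or_introl erefl)) => _ [/allP h _]; exact: ltnW (h r hr).
- by apply: IH => // qt' h; apply: hl; right.
Qed.

Lemma fstates_alllist (l : seq (Q * form Q)) i r :
  (forall qt, List.In qt l -> hord H qt.1 = i /\ all (fun q => hord H q < i) (fstates qt.2) /\
       all (pred1 0) (fv qt.2)) ->
  r \in fstates (bigAnd [seq FAll 0 (FOr (FAtom qt.1 0) qt.2) | qt <- l]) -> hord H r <= i.
Proof.
elim: l => [|qt l IH] //= hl; rewrite in_cons mem_cat => /orP [/eqP->|/orP [hr|hr]].
- by case: (hl qt (or_introl erefl)) => ->.
- case: (hl qt (or_introl erefl)) => _ [/allP h _]; exact: ltnW (h r hr).
- by apply: IH => // qt' h; apply: hl; right.
Qed.

Lemma shape_bound : is_hfta H -> forall q a, exists g,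
  fequiv (delta (aut H) q a) g /\ forall r, r \in fstates g -> hord H r <= hord H q.
Proof.
move=> [_ hH] q a; have := hH (hord H q) (ex_intro _ q erefl).
case: (hexist H (hord H q)).
- case=> /(_ q a erefl) [l [hl eqv]] _; eexists; split; first exact: eqv.
  move=> r; exact: fstates_exlist hl.
- case=> [/(_ q a erefl) [g [_ [/allP hg eqv]]]|[/(_ q a erefl) [l [hl eqv]] _]].
  + exists g; split => // r /hg; exact: ltnW.
  + eexists; split; first exact: eqv.
    move=> r; exact: fstates_alllist hl.
Qed.

Lemma order_restrict (X : Type) (S : X -> Prop) (I : X -> {set Q}) q a :
  is_hfta H -> (exists s, S s) -> models S I (delta (aut H) q a) ->
  models S (fun v => [set r in I v | hord H r <= hord H q]) (delta (aut H) q a).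
Proof.
move=> hH ne hm; case: (shape_bound hH q a) => g [eqv hg].
apply/(eqv X S _ ne); have hm' := (eqv X S I ne).1 hm.
move=> e he; apply: sat_mono (hm' e he) => v r hr hI; by rewrite inE hI hg.
Qed.

Lemma chain_step (X : Type) (S : X -> Prop) (I : X -> {set Q}) q a :
  is_hfta H -> (exists s, S s) -> q \in Ql H ->
  functional (Ql H) (delta (aut H) q a) ->
  models S I (delta (aut H) q a) ->
  exists I' : X -> {set Q}, (forall v r, r \in I' v -> r \in I v) /\
    models S I' (delta (aut H) q a) /\
    exists x, S x /\ exists q'', q'' \in Ql H /\ I' x = [set q''] /\
      forall v, v <> x -> forall r, r \in I' v -> hord H r < hord H q.
Proof.
move=> hH ne hq [_ [l [hl eqv]]] hI.
have m := (eqv X S I ne).1 hI.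
have [s0 Ss0] := ne.
have := m (fun _ => s0) (fun _ => Ss0).
move/sat_bigOr => [f [/In_map [[TE TA] [hin ->]] hsat]].
move: (hl _ hin) => /= [A hA [q'' hq'' [EA hdis]]].
move/sat_basic: hsat => [e' [hS [hd [ht hall]]]].
set As := enum TE in hS hd ht hall.
have hAs : A \in As by rewrite mem_enum.
set j := index A As.
have hj : j < size As by rewrite index_mem.
have nthj : nth set0 As j = A by rewrite nth_index.
set x := e' j.
pose I1 := fun v => if pb (v = x) then [set q''] else I v :\: Ql H.
have sem1 : basic_sem S I1 TE TA e'.
  split => //; split => //; split.
  - move=> i hi; rewrite /I1; have [Eij|nij] := eqVneq i j.
      by rewrite Eij nthj EA; case: pbP => // [_ | []] //.
    case: pbP => [E|_]; first by case: (hd i j hi hj nij).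
    rewrite subsetD ht //=; apply: hdis; rewrite inE; apply/orP; left; apply/setD1P; split.
      by rewrite -nthj nth_uniq ?enum_uniq.
    by rewrite -mem_enum mem_nth.
  - move=> v Sv; case: (hall v Sv) => [h|[B [hB hBs]]]; first by left.
    rewrite /I1; case: pbP => [E|_]; first by left; exists j.
    right; exists B; split => //; rewrite subsetD hBs /=; apply: hdis; by rewrite inE hB orbT.
have m1 : models S I1 (delta (aut H) q a).
  apply/(eqv X S I1 ne) => e _; apply/sat_bigOr; exists (basic TE TA); split.
    by apply/In_map; exists (TE, TA).
  by apply/sat_basic; exists e'.
have m2 := order_restrict hH ne m1.
have hqq : hord H q'' = hord H q.
  by move: hq'' hq; rewrite !inE => /eqP-> /eqP->.
exists (fun v => [set r in I1 v | hord H r <= hord H q]); split; last split => //.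
- move=> v r; rewrite inE /I1; case: pbP => [->|_].
    by rewrite inE => /andP [/eqP-> _]; move/subsetP: (ht j hj); apply; rewrite nthj EA inE.
  by rewrite inE => /andP [/andP [_ ->]].
- exists x; split; first exact: hS.
  exists q''; split => //; split.
  + apply/setP => r; rewrite !inE /I1; case: pbP => // _; rewrite inE.
    by case: eqP => //= ->; rewrite hqq leqnn.
  + move=> v nv r; rewrite inE /I1; case: pbP => // _.
    rewrite !inE => /andP [/andP [nr _] le]; rewrite ltn_neqAle le andbT.
    move: nr hq; rewrite inE => nr /eqP ->; by [].
Qed.
End Restrict.


Lemma choice_fun (A B : Type) (R : A -> B -> Prop) :
  (forall a, exists b, R a b) -> exists f, forall a, R a (f a).
Proof.
move=> h; exists (fun a => proj1_sig (constructive_indefinite_description _ (h a))).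
move=> a; exact: proj2_sig (constructive_indefinite_description _ (h a)).
Qed.

Lemma setD1_notin (T : finType) (a : T) (A : {set T}) : a \notin A -> A :\ a = A.
Proof. move=> na; apply/setP => z; rewrite !inE; case: eqP => // ->; by rewrite (negbTE na). Qed.

Section Run.
Variables (Sig : Type) (Q : finType) (A : fta Sig Q) (D : Type) (T : seq D -> Prop)
  (Lab : seq D -> Sig) (Dr : Type) (Tr : seq Dr -> Prop) (Labr : seq Dr -> Q * seq D).
Hypothesis hrun : is_run A T Lab Tr Labr.
Hypothesis hT : tree T.

Lemma run_reads y : Tr y -> T (Labr y).2 /\ size (Labr y).2 = size y.
Proof.
case: hrun => [[htr0 htrc] [hroot hstep]].
elim/last_ind: y => [|y d IH]; first by rewrite hroot; case: hT.
move=> hyd; have hy := htrc _ _ hyd.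
case: (hstep y hy) => I [_ [/(_ d hyd) [[d' [E Tw]] _] _]].
split => //; rewrite E !size_rcons; by case: (IH hy) => _ ->.
Qed.
End Run.

Lemma models_orl (Q : finType) (X : Type) (S : X -> Prop) (I : X -> {set Q}) f g :
  models S I f -> models S I (FOr f g).
Proof. by move=> h e he; left; apply: h. Qed.
Lemma models_orr (Q : finType) (X : Type) (S : X -> Prop) (I : X -> {set Q}) f g :
  models S I g -> models S I (FOr f g).
Proof. by move=> h e he; right; apply: h. Qed.

Lemma backward (AP Q : finType) (D : Type) (H : hfta {set AP} Q) (p : AP) :
  is_hfta H -> nondet_one_path D H ->
  forall (T : seq D -> Prop) (Lab : seq D -> {set AP}),
    chain_proj p (@lang {set AP} Q (aut H) D) T Lab ->
    (kripke [set~ p] T Lab /\ lang (aut (proj_aut H p)) T Lab).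
Proof.
move=> hH [_ [_ hnd]] T Lab [hk [pi [hpi [Lab' [hL hLab]]]]].
split => //; case: (hk) => hT [hnb hsub].
split => //; split => //.
case: (hnd T Lab' hL pi hpi) => Dr [Tr [Labr [hrun [hacc huniq]]]].
exists Dr, Tr, Labr; split => //.
case: (hrun) => htr [hroot hstep]; split => //; split => // y hy.
case: (hstep y hy) => I [hm hrest]; exists I; split => //.
have [Tw _] := run_reads hrun hT hy.
set w := (Labr y).2 in hm Tw *; set q := (Labr y).1 in hm *.
case: (hLab w Tw) => hon hoff.
rewrite /= ; case: ifP => hq.
- case: (classic (on_path pi w)) => [hp|hp].
  + have E := hon hp.
    case: (boolP (p \in Lab' w)) => pin.
    * apply: models_orr; by rewrite -E setD1K.
    * apply: models_orl; by rewrite -E setD1_notin.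
  + by apply: models_orl; rewrite -(hoff hp).
- have hp : ~ on_path pi w.
    move=> hp; case: (huniq w hp) => y0 [hy0 [_ [hq0 hu]]].
    by move: hq0; rewrite -(hu y hy erefl) -/q hq.
  by rewrite -(hoff hp).
Qed.


Inductive TR (Dr D : Type) (Q : finType) (Tr : seq Dr -> Prop) (Labr : seq Dr -> Q * seq D)
  (NI : seq Dr -> seq D -> {set Q}) (pick : seq Dr -> Q * seq D -> option Dr) : seq Dr -> Prop :=
| TR0 : TR Tr Labr NI pick [::]
| TRs y d : TR Tr Labr NI pick y -> Tr (rcons y d) ->
    (Labr (rcons y d)).1 \in NI y (Labr (rcons y d)).2 ->
    pick y (Labr (rcons y d)) = Some d -> TR Tr Labr NI pick (rcons y d).

Lemma TR_inv (Dr D : Type) (Q : finType) Tr Labr NI pick z :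
  @TR Dr D Q Tr Labr NI pick z -> forall y d, z = rcons y d ->
  TR Tr Labr NI pick y /\ Tr (rcons y d) /\
  (Labr (rcons y d)).1 \in NI y (Labr (rcons y d)).2 /\ pick y (Labr (rcons y d)) = Some d.
Proof.
case => [|y0 d0 h1 h2 h3 h4] y d E.
- by move: (f_equal size E); rewrite size_rcons.
- by move/rcons_inj: E => [<- <-].
Qed.

Lemma TR_Tr (Dr D : Type) (Q : finType) Tr Labr NI pick y :
  Tr [::] -> @TR Dr D Q Tr Labr NI pick y -> Tr y.
Proof. by move=> h0; case. Qed.

Fixpoint chain (Dr L : Type) (pick : seq Dr -> L -> option Dr) (nx : seq Dr -> L) (k : nat)
  : seq Dr :=
  match k with
  | 0 => [::]
  | k'.+1 => let y := chain pick nx k' in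
             if pick y (nx y) is Some d then rcons y d else y
  end.


Lemma forward (AP Q : finType) (D : Type) (H : hfta {set AP} Q) (p : AP) :
  is_hfta H -> nondet_one_path D H ->
  forall (T : seq D -> Prop) (Lab : seq D -> {set AP}),
    (kripke [set~ p] T Lab /\ lang (aut (proj_aut H p)) T Lab) ->
    chain_proj p (@lang {set AP} Q (aut H) D) T Lab.
Proof.
move=> hH [hex [hfun _]] T Lab [hk [hT [hnb [Dr [Tr [Labr [hrun hacc]]]]]]].
case: (hrun) => htr [hroot hstep].
set l := hord H (q0 (aut H)).
have hQl : forall r, (r \in Ql H) = (hord H r == l) by move=> r; rewrite inE.
have ne : forall y, Tr y -> exists s, is_child T (Labr y).2 s.
  move=> y hy; case: (run_reads hrun hT hy) => Tw _; case: (hnb _ Tw) => d hd.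
  by exists (rcons (Labr y).2 d); exists d.
pose P := fun y (t : (seq D -> {set Q}) * bool * seq D * Q) =>
  Tr y ->
  (forall v r, r \in t.1.1.1 v -> is_child T (Labr y).2 v ->
     exists d, Tr (rcons y d) /\ Labr (rcons y d) = (r, v)) /\
  ((Labr y).1 \in Ql H ->
     models (is_child T (Labr y).2) t.1.1.1 (delta (aut H) (Labr y).1
        (if t.1.1.2 then p |: Lab (Labr y).2 else Lab (Labr y).2)) /\
     is_child T (Labr y).2 t.1.2 /\ t.2 \in Ql H /\ t.1.1.1 t.1.2 = [set t.2] /\
     forall v, v <> t.1.2 -> forall r, r \in t.1.1.1 v -> hord H r < l) /\
  ((Labr y).1 \notin Ql H ->
     models (is_child T (Labr y).2) t.1.1.1 (delta (aut H) (Labr y).1 (Lab (Labr y).2)) /\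
     forall v r, r \in t.1.1.1 v -> hord H r <= hord H (Labr y).1).
have hP : forall y, exists t, P y t.
  move=> y; case: (classic (Tr y)) => hy; last first.
    by exists (fun _ => set0, false, [::], q0 (aut H)).
  case: (hstep y hy) => I0 [hm [_ h3]].
  have hne := ne y hy.
  move: hm h3 hne; rewrite /P; set w := (Labr y).2; set q := (Labr y).1 => hm h3 hne.
  move: hm; rewrite /=; case: ifP => hq hm.
  - have hql : hord H q = l by move: hq; rewrite hQl => /eqP.
    have [hs1 _] := hH.
    case: (models_or hne (hs1 q (Lab w)) (hs1 q (p |: Lab w)) hm) => hm'.
    + case: (chain_step hH hne hq (hfun q (Lab w) hq) hm') =>
        I' [hsub [hm'' [x [Sx [q'' [hq'' [hIx hlt]]]]]]].
      exists (I', false, x, q'') => _ /=; split; [|split].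
      * move=> v r hr hv; apply: h3 => //; exact: hsub.
      * move=> _; do 4! (split => //); by rewrite -hql.
      * by [].
    + case: (chain_step hH hne hq (hfun q (p |: Lab w) hq) hm') =>
        I' [hsub [hm'' [x [Sx [q'' [hq'' [hIx hlt]]]]]]].
      exists (I', true, x, q'') => _ /=; split; [|split].
      * move=> v r hr hv; apply: h3 => //; exact: hsub.
      * move=> _; do 4! (split => //); by rewrite -hql.
      * by [].
  - exists (fun v => [set r in I0 v | hord H r <= hord H q], false, [::], q0 (aut H)) => _ /=.
    split; [|split].
    + by move=> v r; rewrite inE => /andP [hr _] hv; apply: h3.
    + by rewrite ?hq.
    + move=> _; split; first exact: order_restrict.
      by move=> v r; rewrite inE => /andP [].
case: (choice_fun hP) => st hst.
have hpk : forall yl : seq Dr * (Q * seq D), exists o : option Dr,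
    (exists d, Tr (rcons yl.1 d) /\ Labr (rcons yl.1 d) = yl.2) ->
    exists d, o = Some d /\ Tr (rcons yl.1 d) /\ Labr (rcons yl.1 d) = yl.2.
  move=> [y lab]; case: (classic (exists d, Tr (rcons y d) /\ Labr (rcons y d) = lab)).
  - by case=> d hd; exists (Some d) => _; exists d.
  - by move=> hn; exists None => h; case: hn.
case: (choice_fun hpk) => pk hpk'.
pose pick := fun y lab => pk (y, lab).
have hpick : forall y lab, (exists d, Tr (rcons y d) /\ Labr (rcons y d) = lab) ->
    exists d, pick y lab = Some d /\ Tr (rcons y d) /\ Labr (rcons y d) = lab.
  by move=> y lab h; apply: (hpk' (y, lab)).
pose NI := fun y => (st y).1.1.1.
pose bb := fun y => (st y).1.1.2.
pose xx := fun y => (st y).1.2.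
pose qq := fun y => (st y).2.
pose nx := fun y => (qq y, xx y).
pose ch := chain pick nx.
pose TR' := TR Tr Labr NI pick.
pose pi := fun k => (Labr (ch k)).2.
have htr0 : Tr [::] by case: htr.
have TR_Tr' : forall y, TR' y -> Tr y by move=> y; apply: TR_Tr.
have Lnext : forall k, TR' (ch k) -> (Labr (ch k)).1 \in Ql H ->
    exists d, ch k.+1 = rcons (ch k) d /\ pick (ch k) (nx (ch k)) = Some d /\
      Tr (rcons (ch k) d) /\ Labr (ch k.+1) = nx (ch k).
  move=> k hk' hq.
  have hy := TR_Tr' _ hk'.
  case: (hst (ch k) hy) => h1 [/(_ hq) [_ [hx [_ [hIx _]]]] _].
  have : exists d, Tr (rcons (ch k) d) /\ Labr (rcons (ch k) d) = nx (ch k).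
    apply: h1 hx; rewrite hIx; exact: set11.
  case/hpick => d [E1 [E2 E3]]; exists d.
  have Ech : ch k.+1 = rcons (ch k) d by rewrite /ch /= -/(ch k) -/(pick) E1.
  by rewrite Ech.
have Lch : forall k, TR' (ch k) /\ (Labr (ch k)).1 \in Ql H.
  elim=> [|k [IH1 IH2]]; first by split; [exact: TR0|rewrite hroot /= hQl].
  case: (Lnext k IH1 IH2) => d [Ech [Ep [Etr Elab]]].
  have hy := TR_Tr' _ IH1.
  case: (hst (ch k) hy) => _ [/(_ IH2) [_ [_ [hq'' [hIx _]]]] _].
  have Elab' : Labr (rcons (ch k) d) = nx (ch k) by rewrite -Ech.
  rewrite Ech; split.
  - apply: TRs => //; rewrite Elab' //=; by rewrite /NI hIx set11.
  - by rewrite Elab'.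
have Lsize : forall k, size (ch k) = k.
  elim=> [|k IH] //; case: (Lch k) => h1 h2; case: (Lnext k h1 h2) => d [-> _].
  by rewrite size_rcons IH.
have Rsz : forall y, TR' y -> size (Labr y).2 = size y.
  by move=> y /TR_Tr' /(run_reads hrun hT) [].
have Lpisz : forall k, size (pi k) = k.
  by move=> k; rewrite /pi Rsz ?Lsize //; case: (Lch k).
have Lchild : forall k, is_child T (pi k) (pi k.+1).
  move=> k; case: (Lch k) => h1 h2; case: (Lnext k h1 h2) => d [_ [_ [_ Elab]]].
  rewrite /pi Elab /=; case: (hst (ch k) (TR_Tr' _ h1)) => _ [/(_ h2) [_ [hx _]] _].
  exact: hx.
have Luniq : forall k y, TR' y -> (Labr y).2 = pi k -> y = ch k.
  elim=> [|k IH] y hy E.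
  - by apply: size0nil; rewrite -Rsz // E /pi /= hroot.
  - move: hy E; case/lastP: y => [|y0 d] hy E.
      by move: (f_equal size E); rewrite Rsz // Lpisz.
    case: (TR_inv hy erefl) => hy0 [htr1 [hmem hpk1]].
    have hy0' := TR_Tr' _ hy0.
    case: (hstep y0 hy0') => I [_ [/(_ d htr1) [[d1 [E1 _]] _] _]].
    case: (Lchild k) => d2 [E2 _].
    have E0 : (Labr y0).2 = pi k by move: E; rewrite E1 E2 => /rcons_inj [].
    have Ey0 := IH y0 hy0 E0; subst y0.
    case: (Lch k) => h1 h2.
    case: (hst (ch k) (TR_Tr' _ h1)) => _ [/(_ h2) [_ [_ [_ [hIx _]]]] _].
    case: (Lnext k h1 h2) => d' [Ech [Ep [_ Elab]]].
    have Ex : (Labr (rcons (ch k) d)).2 = xx (ch k) by rewrite E /pi Elab.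
    move: hmem; rewrite Ex /NI hIx inE => /eqP Eq.
    have Elab2 : Labr (rcons (ch k) d) = nx (ch k) by rewrite [LHS]surjective_pairing Eq Ex.
    by move: hpk1; rewrite Elab2 Ep => [[<-]]; rewrite Ech.
have Linv : forall y, TR' y -> (exists k, y = ch k) \/ hord H (Labr y).1 < l.
  move=> y hy; elim: hy => [|y0 d hy0 IH htr1 hmem hpk1]; first by left; exists 0.
  case: IH => [[k Ek]|hlt].
  - subst y0; case: (Lch k) => h1 h2.
    case: (hst (ch k) (TR_Tr' _ h1)) => _ [/(_ h2) [_ [_ [_ [hIx hlt]]]] _].
    case: (classic ((Labr (rcons (ch k) d)).2 = xx (ch k))) => [Ex|nx'].
    + left; exists k.+1; case: (Lnext k h1 h2) => d' [Ech [Ep _]].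
      move: hmem; rewrite Ex /NI hIx inE => /eqP Eq.
      have Elab2 : Labr (rcons (ch k) d) = nx (ch k) by rewrite [LHS]surjective_pairing Eq Ex.
      by move: hpk1; rewrite Elab2 Ep => [[<-]]; rewrite Ech.
    + by right; apply: (hlt _ nx' _ hmem).
  - right; have hnq : (Labr y0).1 \notin Ql H by rewrite hQl neq_ltn hlt.
    case: (hst y0 (TR_Tr' _ hy0)) => _ [_ /(_ hnq) [_ hle]].
    exact: leq_ltn_trans (hle _ _ hmem) hlt.
pose Lab' := fun w => if pb (exists k, pi k = w /\ bb (ch k)) then p |: Lab w else Lab w.
have Lpi : forall k, Lab' (pi k) = if bb (ch k) then p |: Lab (pi k) else Lab (pi k).
  move=> k; rewrite /Lab'; case: pbP => [[k' [E b]]|hn].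
  - have Ek : k' = k by rewrite -(Lpisz k') E Lpisz.
    by subst k'; rewrite b.
  - case hb: (bb (ch k)) => //; case: hn; by exists k.
have Loff : forall w, (forall k, pi k <> w) -> Lab' w = Lab w.
  move=> w hw; rewrite /Lab'; case: pbP => // [[k [E _]]]; by case: (hw k).
case: (hk) => hTt [hnbt hsub].
split => //; exists pi; split.
  split; [by rewrite /pi /= hroot | exact: Lchild].
exists Lab'; split; last first.
  move=> w Tw.
  have np : p \notin Lab w.
    by move/subsetP: (hsub w Tw) => h; apply/negP => /h; rewrite !inE eqxx.
  split.
  - case=> k Ek; rewrite -Ek Lpi; rewrite -Ek in np.
    by case: (bb (ch k)); [exact: setU1K|exact: setD1_notin].
  - move=> hn; apply: Loff => k E; apply: hn; by exists k.
split => //; split => //.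
exists Dr, TR', Labr; split.
- split.
    split; first exact: TR0.
    move=> w d /TR_inv h; by case: (h w d erefl).
  split => //.
  move=> y hy; exists (NI y); split; [|split].
  + case: (Linv y hy) => [[k Ek]|hlt].
    * subst y; case: (Lch k) => h1 h2.
      case: (hst (ch k) (TR_Tr' _ h1)) => _ [/(_ h2) [hm _] _].
      have := Lpi k; rewrite /pi => ->; exact: hm.
    * have hnq : (Labr y).1 \notin Ql H by rewrite hQl neq_ltn hlt.
      case: (hst y (TR_Tr' _ hy)) => _ [_ /(_ hnq) [hm _]].
      rewrite Loff //; move=> k E.
      have Ey := Luniq k y hy (esym E); subst y.
      by case: (Lch k) => _; rewrite (negbTE hnq).
  + move=> d hd; case: (TR_inv hd erefl) => hy0 [htr1 [hmem _]]; split => //.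
    case: (hstep y (TR_Tr' _ hy)) => I [_ [/(_ d htr1) [hc _] _]]; exact: hc.
  + move=> w' q' hc hq'; case: (hst y (TR_Tr' _ hy)) => h1 _.
    case: (h1 w' q' hq' hc) => d0 hd0.
    case: (hpick y (q', w') (ex_intro _ d0 hd0)) => d [Ep [htr1 Elab]].
    exists d; split => //; apply: TRs => //; rewrite Elab //.
- move=> rho [h0 hc]; apply: hacc; split => // k; case: (hc k) => d [E hTR].
  exists d; split => //; exact: TR_Tr'.
Qed.

Unset Implicit Arguments.

Theorem proposition14 (AP Q : finType) (D : Type) (H : hfta {set AP} Q) (p : AP) :
  is_hfta H -> nondet_one_path D H ->
  forall (T : seq D -> Prop) (Lab : seq D -> {set AP}),
    (kripke [set~ p] T Lab /\ lang (aut (proj_aut H p)) T Lab) <->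
    chain_proj p (@lang {set AP} Q (aut H) D) T Lab.
Proof.
move=> hH hnd T Lab; split; [exact: forward | exact: backward].
Qed.
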